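(* Let $X$ be a Polish space and let $\rho:\mathcal{F}\to[\Psi]^\omega$ be a partition regular function. If $\mathcal{F}$ is an analytic subset of $[\Omega]^\omega$ and $\rho$ is a Borel function, then $\mathscr{L}_X(\rho)\subseteq\Sigma^1_1(X)$, i.e., every set in $\mathscr{L}_X(\rho)$ is an analytic subset of $X$.
   Context: Let $\Omega,\Psi$ be countably infinite sets and $\mathcal{F}\subseteq[\Omega]^\omega$ a nonempty family of infinite subsets of $\Omega$ with $A\setminus K\in\mathcal{F}$ for all $A\in\mathcal{F}$ and finite $K\subseteq\Omega$. A function $\rho:\mathcal{F}\to[\Psi]^\omega$ is partition regular if: (M) $E\subseteq F$ in $\mathcal{F}$ implies $\rho(E)\subseteq\rho(F)$; (R) for every $F\in\mathcal{F}$ and $A,B\subseteq\Psi$ with $\rho(F)=A\cup B$ there is $E\in\mathcal{F}$ with $\rho(E)\subseteq A$ or $\rho(E)\subseteq B$; (S) for every $F\in\mathcal{F}$ there is $E\subseteq F$, $E\in\mathcal{F}$, such that for every $a\in\rho(E)$ there is a finite $K\subseteq\Omega$ with $a\notin\rho(E\setminus K)$. Subsets of $\Omega$ are identified with their characteristic functions, so $2^\Omega=\{0,1\}^\Omega$ carries the product topology (discrete on $\{0,1\}$), and $[\Omega]^\omega$ (infinite subsets) is a $G_\delta$ subspace, hence Polish; likewise for $[\Psi]^\omega\subseteq2^\Psi$. For $x:\Psi\to X$, $\Lambda_x(\rho)$ is the set of $\eta\in X$ for which there is $F\in\mathcal{F}$ such that for every neighborhood $U$ of $\eta$ there is a finite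 $K\subseteq\Omega$ with $x_s\in U$ for all $s\in\rho(F\setminus K)$. $\mathscr{L}_X(\rho)=\{A\subseteq X:\exists x\in X^\Psi\ A=\Lambda_x(\rho)\}\cup\{\emptyset\}$, and $\Sigma^1_1(X)$ is the family of analytic subsets of $X$. *)

(* Defs.v *)
From mathcomp Require Import all_boot all_order all_algebra.
From mathcomp Require Import all_classical all_reals all_analysis.
From mathcomp Require Import Rstruct.
Set Implicit Arguments. Unset Strict Implicit. Unset Printing Implicit Defensive.
Import Order.TTheory GRing.Theory Num.Theory.
Local Open Scope classical_set_scope.
Local Open Scope ring_scope.

Notation baire_space := {ptws nat -> nat}.

(** The Cantor cube 2^A = {0,1}^A with the product topology
    (subsets of A identified with their characteristic functions). *)
Notation cube A := {ptws A -> bool}.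

Definition polish (T : topologicalType) : Prop :=
  exists d : T -> T -> Rdefinitions.R,
    [/\
        [/\ (forall x y, 0 <= d x y),
             (forall x y, d x y = 0 <-> x = y),
             (forall x y, d x y = d y x) &
             (forall x y z, d x z <= d x y + d y z)],
        (forall U : set T, open U <->
           (forall x, U x -> exists2 e, 0 < e & forall y, d x y < e -> U y)),
        (forall u : nat -> T,
           (forall e, 0 < e -> exists N, forall m n, (N <= m)%N -> (N <= n)%N ->
               d (u m) (u n) < e) ->
           exists l, forall e, 0 < e -> exists N, forall n, (N <= n)%N ->
               d (u n) l < e)
      & exists D : set T, countable D /\ closure D = setT].

Definition analytic (T : topologicalType) (A : set T) : Prop :=
  A = set0 \/ exists f : baire_space -> T, continuous f /\ range f = A.

Definition borel_set (T : topologicalType) : set (set T) :=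
  smallest (sigma_algebra setT) open.

(** [A]^omega : infinite subsets of A (as characteristic functions). *)
Definition infsets (A : Type) : set (cube A) :=
  [set S | infinite_set [set a | S a]].
Arguments infsets A : clear implicits.

Definition setminus_fin (A : eqType) (S : cube A) (K : seq A) : cube A :=
  fun a => S a && (a \notin K).

Definition subfun (A : Type) (S T : cube A) : Prop := forall a, S a -> T a.

Definition partition_regular (Omega Psi : countType) (calF : set (cube Omega))
    (rho : cube Omega -> cube Psi) : Prop :=
  [/\ (forall E F, calF E -> calF F -> subfun E F -> subfun (rho E) (rho F)),
      (forall F (A B : set Psi), calF F ->
          (forall s, rho F s <-> A s \/ B s) ->
          exists2 E, calF E &
            (forall s, rho E s -> A s) \/ (forall s, rho E s -> B s))
    & (forall F, calF F -> exists E, [/\ subfun E F, calF E &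
          forall a, rho E a -> exists K : seq Omega, ~~ rho (setminus_fin E K) a])].

Definition Lambda (Omega Psi : countType) (X : topologicalType)
    (calF : set (cube Omega)) (rho : cube Omega -> cube Psi) (x : Psi -> X) : set X :=
  [set eta | exists2 F, calF F &
     forall U, nbhs eta U -> exists K : seq Omega,
       forall s, rho (setminus_fin F K) s -> U (x s)].

Definition scrL (Omega Psi : countType) (X : topologicalType)
    (calF : set (cube Omega)) (rho : cube Omega -> cube Psi) : set (set X) :=
  [set A | (exists x : Psi -> X, A = Lambda calF rho x) \/ A = set0].

(* Main.v *)
Require Import Defs.
From mathcomp Require Import all_boot all_order all_algebra.
From mathcomp Require Import all_classical all_reals all_analysis.
From mathcomp Require Import lra Rstruct.
Set Implicit Arguments. Unset Strict Implicit. Unset Printing Implicit Defensive.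
Import Order.TTheory GRing.Theory Num.Theory.
Local Open Scope classical_set_scope.

Definition cyl (z : baire_space) N : set baire_space :=
  [set w | forall i, (i < N)%N -> w i = z i].

Lemma nbhs_coord (I : countType) (T : topologicalType) (z : {ptws I -> T}) (i : I) (V : set T) :
  nbhs (z i) V -> nbhs z [set w : {ptws I -> T} | V (w i)].
Proof. move=> h; exact: (@proj_continuous I (fun _ => T) i z V h). Qed.

Lemma nat_nbhs (n : nat) (V : set nat) : V n -> nbhs n V.
Proof. by move=> Vn; rewrite nbhs_principalE; apply/principal_filterP. Qed.

Lemma nat_nbhsE (n : nat) (V : set nat) : nbhs n V -> V n.
Proof. by rewrite nbhs_principalE => /principal_filterP. Qed.

Lemma cyl_nbhs z N : nbhs z (cyl z N).
Proof.
elim: N => [|N IH].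
  by apply: filterS (@filterT _ _ _); move=> w _ i.
have h2 : nbhs z [set w : baire_space | w N = z N].
  by apply: (nbhs_coord (V := [set n | n = z N])); apply: nat_nbhs.
apply: filterS (filterI IH h2) => w [h1 h3] i; rewrite ltnS leq_eqVlt.
by case/orP => [/eqP -> //|]; apply: h1.
Qed.

Lemma cyl_mono z M N : (M <= N)%N -> cyl z N `<=` cyl z M.
Proof. by move=> MN w h i iM; apply: h; apply: leq_trans MN. Qed.

Lemma nbhs_cylP (z : baire_space) (U : set baire_space) : nbhs z U -> exists N, cyl z N `<=` U.
Proof.
pose G := filter_from [set: nat] (cyl z).
have FG : Filter G.
  apply: filter_from_filter; first by exists 0%N.
  move=> i j _ _; exists (maxn i j) => //.
  by move=> w h; split; apply: (cyl_mono _ h); rewrite ?leq_maxl ?leq_maxr.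
have : G --> (z : baire_space).
  apply/pointwise_cvgP => t V /nat_nbhsE Vz.
  exists t.+1 => // w h; rewrite /= h //.
by move=> /(_ U) h /h [N _ hN]; exists N.
Qed.

Lemma ptws_cvg (I : Type) (T : topologicalType) (F : set_system {ptws I -> T}) (f : {ptws I -> T}) :
  Filter F -> (forall i, (fun g : {ptws I -> T} => g i) @ F --> f i) -> F --> f.
Proof.
move=> FF h; apply/cvg_sup => i; apply/cvg_image.
  by rewrite eqEsubset; split => // t _; exists (fun _ => t).
move=> V /h FV; exists ((fun g : {ptws I -> T} => g i) @^-1` V) => //.
rewrite eqEsubset; split => [t [g /= Vg <-] //|t Vt]; by exists (fun _ => t).
Qed.

Lemma cont_ptws (S : topologicalType) (I : Type) (T : topologicalType)
   (h : S -> {ptws I -> T}) :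
  (forall i, continuous (fun s => h s i)) -> continuous h.
Proof. by move=> hc s; apply: ptws_cvg => i; apply: hc. Qed.

Lemma baire_cont (S : topologicalType) (h : S -> baire_space) :
  (forall i s, \forall w \near s, h w i = h s i) -> continuous h.
Proof.
move=> H; apply: cont_ptws => i s V /nat_nbhsE Vhs.
by apply: filterS (H i s) => w /= ->.
Qed.

Lemma near_coord (z : baire_space) i : \forall w \near z, w i = z i.
Proof. by apply: filterS (cyl_nbhs z i.+1) => w; apply. Qed.

Lemma near_cyl (z : baire_space) N : \forall w \near z, cyl w N = cyl z N.
Proof.
apply: filterS (cyl_nbhs z N) => w h; rewrite eqEsubset; split => v hv i iN;
by rewrite hv // h.
Qed.

Definition shift1 (p : baire_space) : baire_space := fun i => p i.+1.

Lemma shift1_cont : continuous shift1.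
Proof. by apply: baire_cont => i s; apply: near_coord. Qed.

Lemma comp_cont (S T U : topologicalType) (f: S->T) (g: T->U) :
  continuous f -> continuous g -> continuous (g \o f).
Proof. by move=> cf cg x; apply: continuous_comp; [exact: cf | exact: cg]. Qed.

Lemma analytic_bigcup (A : nat -> set baire_space) :
  (forall n, analytic (A n)) -> analytic (\bigcup_n A n).
Proof.
move=> hA.
have [allE|] := pselect (forall n, A n = set0).
  by left; rewrite eqEsubset; split => // z [n _]; rewrite allE.
move=> /existsNP [n0 An0].
have [f0 [cf0 rf0]] : exists f : baire_space -> baire_space, continuous f /\ range f = A n0.
  by case: (hA n0).
have : forall n, exists f : baire_space -> baire_space,
    continuous f /\ (range f `<=` \bigcup_n A n) /\ (A n `<=` range f).
  move=> n; case: (hA n) => [-> | [f [cf rf]]].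
    exists f0; split => //; split => // z; rewrite rf0 => h; by exists n0.
  exists f; split => //; rewrite rf; split => // z h; by exists n.
move=> /choice [f hf].
right; exists (fun p => f (p 0%N) (shift1 p)); split.
  move=> z U hU.
  have h1 : nbhs z ((f (z 0%N) \o shift1) @^-1` U).
    exact: (comp_cont shift1_cont (hf (z 0%N)).1).
  apply: filterS (filterI h1 (near_coord z 0)) => w [h2 h3] /=.
  by rewrite h3.
rewrite eqEsubset; split.
  by move=> _ [p _ <-]; apply: (hf (p 0%N)).2.1; exists (shift1 p).
move=> z [n _ Anz]; have [q _ <-] := (hf n).2.2 _ Anz.
exists (fun i => if i is i'.+1 then q i' else n) => //.
Qed.

Lemma cyl0 (p : baire_space) : cyl p 0 = setT.
Proof. by rewrite eqEsubset; split => // w _ i. Qed.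

Lemma cyl_refl (p : baire_space) N : cyl p N p.
Proof. by []. Qed.

Lemma analytic_closed (C : set baire_space) : closed C -> analytic C.
Proof.
case: (pselect (C = set0)) => [->|]; first by left.
move=> /eqP/set0P [p0 Cp0] clC; right.
pose meets p N := C `&` cyl p N !=set0.
have mono p M N : (M <= N)%N -> meets p N -> meets p M.
  by move=> MN [w [Cw hw]]; exists w; split => //; apply: (cyl_mono MN).
have uniq p N M : meets p N /\ ~ meets p N.+1 -> meets p M /\ ~ meets p M.+1 -> N = M.
  move=> [h1 h2] [h3 h4]; case: (ltngtP N M) => // NM.
    by exfalso; apply: h2; apply: (mono _ _ _ NM h3).
  by exfalso; apply: h4; apply: (mono _ _ _ NM h1).
have ex p : ~ C p -> exists N, meets p N /\ ~ meets p N.+1.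
  move=> nCp; apply: contra_notP nCp => hn.
  have allm : forall N, meets p N.
    elim => [|N IH]; first by exists p0; split => //; rewrite cyl0.
    apply: contrapT => hN; apply: hn; by exists N.
  have : closure C p; last by move/clC.
  move=> B /nbhs_cylP [N hN].
  have [w [Cw hw]] := allm N; exists w; split => //; exact: hN.
pose m p := xget 0%N [set N | meets p N /\ ~ meets p N.+1].
have mP p : ~ C p -> meets p (m p) /\ ~ meets p (m p).+1.
  by move=> nCp; exact: (xgetPex 0%N (ex p nCp)).
pose c (w : baire_space) N := xget p0 (C `&` cyl w N).
have cP p : ~ C p -> (C `&` cyl p (m p)) (c p (m p)).
  by move=> nCp; exact: (xgetPex p0 (mP p nCp).1).
pose r p := if pselect (C p) then p else c p (m p).
exists r; split.
  apply: baire_cont => i s.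
  case: (pselect (C s)) => Cs.
    have -> : r s = s by rewrite /r; case: pselect.
    apply: filterS (filterI (near_cyl s i.+1) (near_coord s i)) => w [h1 h2].
    rewrite /r; case: pselect => /= // Cw.
    have [_ hc] := cP w Cw.
    rewrite (hc i) ?h2 //.
    have mw : meets w i.+1 by exists s; split => //; rewrite h1.
    case: (leqP i.+1 (m w)) => // hlt.
    by exfalso; apply: (mP w Cw).2; apply: (mono _ _ _ hlt mw).
  set N := m s.
  apply: filterS (filterI (near_cyl s N.+1) (near_cyl s N)) => w [h1 h2].
  have mwN : meets w N = meets s N by rewrite /meets h2.
  have mwN1 : meets w N.+1 = meets s N.+1 by rewrite /meets h1.
  have nCw : ~ C w.
    by move=> Cw; apply: (mP s Cs).2; exists w; split => //; rewrite -h1.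
  have mw : m w = N.
    apply: (uniq w); first exact: (mP w nCw).
    by rewrite mwN mwN1; apply: mP.
  rewrite /r; case: pselect => //= _; case: pselect => //= _.
  by rewrite mw /c h2.
rewrite eqEsubset; split.
  move=> _ [p _ <-]; rewrite /r; case: pselect => // nCp.
  by case: (cP p nCp).
by move=> p Cp; exists p => //; rewrite /r; case: pselect.
Qed.

Definition bcol (n : nat) (w : baire_space) : baire_space := fun m => w (pickle (n, m)).

Lemma bcol_cont n : continuous (bcol n).
Proof. by apply: baire_cont => i s; apply: near_coord. Qed.

Lemma near_fun (f : baire_space -> baire_space) (w : baire_space) i :
  continuous f -> \forall v \near w, f v i = f w i.
Proof. by move=> cf; have := cf w _ (near_coord (f w) i). Qed.

Lemma analytic_bigcap (A : nat -> set baire_space) :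
  (forall n, analytic (A n)) -> analytic (\bigcap_n A n).
Proof.
move=> hA.
case: (pselect (\bigcap_n A n = set0)) => [->|/eqP/set0P [a0 Ha0]]; first by left.
have : forall n, exists f : baire_space -> baire_space, continuous f /\ range f = A n.
  move=> n; case: (hA n) => // An0; exfalso.
  by have := Ha0 n I; rewrite An0.
move=> /choice [f hf].
pose Z := [set w : baire_space | forall n, f n (bcol n w) = f 0%N (bcol 0 w)].
have clZ : closed Z.
  move=> w clw n; apply: contrapT => hne.
  have [i hi] : exists i, f n (bcol n w) i <> f 0%N (bcol 0 w) i.
    apply: contrapT => hh; apply: hne; apply: funext => i.
    by apply: contrapT => hh2; apply: hh; exists i.
  have c1 := near_fun w i (comp_cont (bcol_cont (n:=n)) (hf n).1).
  have c2 := near_fun w i (comp_cont (bcol_cont (n:=0)) (hf 0%N).1).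
  have [v [Zv [e1 e2]]] := clw _ (filterI c1 c2).
  by apply: hi; move: e1 e2 => /= <- <-; rewrite Zv.
have : forall n, exists q, f n q = a0.
  move=> n; have : range (f n) a0 by rewrite (hf n).2; apply: Ha0.
  by case=> q _ <-; exists q.
move=> /choice [q hq].
pose w0 : baire_space := fun i => match unpickle i with Some (n, m) => q n m | None => 0%N end.
have bcolw0 n : bcol n w0 = q n.
  by apply: funext => m; rewrite /bcol /w0 pickleK.
have Zw0 : Z w0 by move=> n; rewrite !bcolw0 !hq.
have [|[r [cr rr]]] := analytic_closed clZ.
  by move=> Z0; move: Zw0; rewrite Z0.
right; exists (f 0%N \o bcol 0 \o r); split.
  exact: (comp_cont cr (comp_cont (bcol_cont (n:=0)) (hf 0%N).1)).
rewrite eqEsubset; split.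
  move=> _ [x _ <-] n _.
  have Zr : Z (r x) by rewrite -rr; exists x.
  by rewrite -(hf n).2 /= -(Zr n); exists (bcol n (r x)).
move=> a Ha.
have : forall n, exists q, f n q = a.
  move=> n; have : range (f n) a by rewrite (hf n).2; apply: Ha.
  by case=> q2 _ <-; exists q2.
move=> /choice [q' hq'].
pose w1 : baire_space := fun i => match unpickle i with Some (n, m) => q' n m | None => 0%N end.
have bcolw1 n : bcol n w1 = q' n.
  by apply: funext => m; rewrite /bcol /w1 pickleK.
have Zw1 : Z w1 by move=> n; rewrite !bcolw1 !hq'.
have [x _ rx] : range r w1 by rewrite rr.
by exists x => //=; rewrite rx bcolw1 hq'.
Qed.

Definition prep (s : seq nat) (p : baire_space) : baire_space :=
  fun i => if (i < size s)%N then nth 0%N s i else p (i - size s)%N.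

Lemma prep_cont s : continuous (prep s).
Proof.
apply: baire_cont => i p; rewrite /prep; case: ifP => _.
  by apply: filterS (cyl_nbhs p 0) => w _.
exact: near_coord.
Qed.

Lemma analytic_open (U : set baire_space) : open U -> analytic U.
Proof.
move=> oU.
pose V n := match unpickle n with
  | Some s => if pselect (range (prep s) `<=` U) then range (prep s) else set0
  | None => set0 end.
have -> : U = \bigcup_n V n.
  rewrite eqEsubset; split; last first.
    move=> z [n _]; rewrite /V; case: (unpickle n) => // s.
    by case: pselect => // h /h.
  move=> z Uz.
  have : nbhs z U by move: oU; rewrite openE => /(_ z Uz).
  move=> /nbhs_cylP [N hN].
  exists (pickle (mkseq z N)) => //; rewrite /V pickleK.
  have sub : range (prep (mkseq z N)) `<=` U.
    move=> _ [p _ <-]; apply: hN => i iN.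
    by rewrite /prep size_mkseq iN nth_mkseq.
  case: pselect => // h0.
  exists (fun i => z (i + N)%N) => //; apply: funext => i.
  rewrite /prep size_mkseq; case: ltnP => iN; first by rewrite nth_mkseq.
  by rewrite subnK.
apply: analytic_bigcup => n; rewrite /V; case: (unpickle n) => [s|]; last by left.
case: pselect => h1; last by left.
by right; exists (prep s); split => //; apply: prep_cont.
Qed.

Lemma borel_pre (Y : topologicalType) (h : baire_space -> Y) (C : set Y) :
  continuous h -> borel_set C -> analytic (h @^-1` C).
Proof.
move=> ch bC.
pose E := [set C : set Y | analytic (h @^-1` C) /\ analytic (h @^-1` (~` C))].
suff : E C by case.
apply: (smallest_sub (G := open) (C := sigma_algebra setT)) => //; last first.
  move=> A oA; have oA' : open (h @^-1` A) by move/continuousP: ch; apply.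
  split; first exact: analytic_open.
  rewrite preimage_setC; apply: analytic_closed; exact: open_closedC.
split.
- rewrite /E /= preimage_set0 setC0 preimage_setT; split; first by left.
  exact: analytic_open openT.
- by move=> A [h1 h2]; rewrite /E /= setTD setCK.
- move=> F hF; split.
    by rewrite preimage_bigcup; apply: analytic_bigcup => n; case: (hF n).
  by rewrite setC_bigcup preimage_bigcap; apply: analytic_bigcap => n; case: (hF n).
Qed.

Lemma analytic_setI (A B : set baire_space) :
  analytic A -> analytic B -> analytic (A `&` B).
Proof.
move=> hA hB.
have -> : A `&` B = \bigcap_i (if i is 0%N then A else B).
  rewrite eqEsubset; split; first by move=> z [a b] [|i].
  by move=> z h; split; [apply: (h 0%N) | apply: (h 1%N)].
by apply: analytic_bigcap => -[|i].
Qed.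

Lemma bool_nbhs (b : bool) (V : set bool) : V b -> nbhs b V.
Proof. by move=> Vb; rewrite nbhs_principalE; apply/principal_filterP. Qed.

Local Open Scope ring_scope.

Notation RR := Rdefinitions.R.

Definition hh (n : nat) : RR := 1 / 2 ^+ n.

Lemma hh_gt0 n : 0 < hh n.
Proof. by rewrite /hh divr_gt0 // exprn_gt0. Qed.

Lemma hh_S n : hh n = 2 * hh n.+1.
Proof.
rewrite /hh exprS !mul1r invfM mulrA mulfV ?mul1r //.
Qed.

Lemma hh_le m n : (m <= n)%N -> hh n <= hh m.
Proof.
move=> /subnKC <-; elim: (n - m)%N => [|k IH]; first by rewrite addn0.
rewrite addnS; apply: le_trans IH; rewrite (hh_S (m + k)).
have := hh_gt0 (m + k).+1; lra.
Qed.

Lemma hh_small (e : RR) : 0 < e -> exists n, hh n < e.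
Proof.
move=> e0; have [N _ hN] := near_infty_natSinv_expn_lt (PosNum e0).
by exists N; apply: hN => /=.
Qed.

Lemma le_of_eps (a b : RR) : (forall e, 0 < e -> a < b + e) -> a <= b.
Proof.
move=> h; apply/ler_addgt0Pr => e e0; exact/ltW/h.
Qed.

Section Metric.
Context (X : topologicalType) (d : X -> X -> RR).
Hypothesis dpos : forall x y, 0 <= d x y.
Hypothesis d0 : forall x y, d x y = 0 <-> x = y.
Hypothesis dsym : forall x y, d x y = d y x.
Hypothesis dtri : forall x y z, d x z <= d x y + d y z.
Hypothesis dopen : forall U : set X, open U <->
           (forall x, U x -> exists2 e, 0 < e & forall y, d x y < e -> U y).

Lemma dxx x : d x x = 0. Proof. by apply/d0. Qed.

Lemma dball_nbhs x e : 0 < e -> nbhs x [set y | d x y < e].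
Proof.
move=> e0; apply: open_nbhs_nbhs; split; last by rewrite /= dxx.
apply/dopen => y /= hy; exists (e - d x y); first by lra.
move=> z hz; have := dtri x y z; lra.
Qed.

Lemma nbhs_dball x U : nbhs x U -> exists2 e, 0 < e & forall y, d x y < e -> U y.
Proof.
rewrite nbhsE => -[B [oB Bx] BU].
have [e e0 he] := (iffLR (dopen B) oB) x Bx.
by exists e => // y /he /BU.
Qed.
End Metric.

Section Fq.
Context (X : topologicalType) (d : X -> X -> RR) (u : nat -> X).
Hypothesis dpos : forall x y, 0 <= d x y.
Hypothesis d0 : forall x y, d x y = 0 <-> x = y.
Hypothesis dsym : forall x y, d x y = d y x.
Hypothesis dtri : forall x y z, d x z <= d x y + d y z.

Fixpoint fq (q : nat -> nat) (k : nat) : nat :=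
  match k with
  | 0 => q 0%N
  | k'.+1 => if d (u (fq q k')) (u (q k)) < hh k then q k else fq q k'
  end.

Lemma fq_step q k : d (u (fq q k)) (u (fq q k.+1)) <= hh k.+1.
Proof.
rewrite /=; case: ifP => h; first exact: ltW.
by rewrite (iffRL (d0 _ _) erefl); apply/ltW/hh_gt0.
Qed.

Lemma fq_cauchy q k n : d (u (fq q k)) (u (fq q (k + n))) <= hh k - hh (k + n).
Proof.
elim: n => [|n IH]; first by rewrite addn0 (iffRL (d0 _ _) erefl) subrr.
rewrite addnS; apply: le_trans (dtri _ (u (fq q (k + n))) _) _.
have := fq_step q (k + n); have := hh_S (k + n); lra.
Qed.

Lemma fq_close q k m : (k <= m)%N -> d (u (fq q k)) (u (fq q m)) < hh k.
Proof.
move=> /subnKC <-; apply: le_lt_trans (fq_cauchy q k (m - k)) _.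
have := hh_gt0 (k + (m - k)); lra.
Qed.

Lemma fq_local q w k : (forall i, (i <= k)%N -> w i = q i) -> fq w k = fq q k.
Proof.
elim: k => [|k IH] h /=; first by rewrite h.
rewrite IH ?h // => i ik; apply: h; exact: leqW.
Qed.

Lemma fq_id q : (forall k, d (u (q k)) (u (q k.+1)) < hh k.+1) -> forall k, fq q k = q k.
Proof.
move=> h; elim => [|k IH] //=; by rewrite IH h.
Qed.

Definition islim (q : nat -> nat) (l : X) :=
  forall e, 0 < e -> exists N, forall n, (N <= n)%N -> d (u (fq q n)) l < e.

Lemma islim_uniq q a b : islim q a -> islim q b -> a = b.
Proof.
move=> ha hb; apply/d0; apply/le_anti; rewrite dpos andbT.
apply: le_of_eps => e e0; rewrite add0r.
have e20 : 0 < e / 2 by lra.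
have [N1 h1] := ha _ e20; have [N2 h2] := hb _ e20.
have := h1 (maxn N1 N2) (leq_maxl _ _); have := h2 (maxn N1 N2) (leq_maxr _ _).
have := dtri a (u (fq q (maxn N1 N2))) b.
have := dsym a (u (fq q (maxn N1 N2))); lra.
Qed.

Hypothesis dcomplete : forall v : nat -> X,
           (forall e, 0 < e -> exists N, forall m n, (N <= m)%N -> (N <= n)%N ->
               d (v m) (v n) < e) ->
           exists l, forall e, 0 < e -> exists N, forall n, (N <= n)%N ->
               d (v n) l < e.

Lemma islim_ex q : exists l, islim q l.
Proof.
rewrite /islim; apply: (@dcomplete (fun n => u (fq q n))) => e e0.
have [N hN] := hh_small e0; exists N => m n Nm Nn.
wlog mn : m n Nm Nn / (m <= n)%N.
  move=> H; case: (leqP m n) => mn; first exact: H.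
  by rewrite dsym; apply: H => //; apply: ltnW.
apply: lt_trans (fq_close q mn) _; apply: le_lt_trans (hh_le Nm) hN.
Qed.

Definition Phi (x0 : X) (q : nat -> nat) : X := xget x0 (islim q).

Lemma Phi_lim x0 q : islim q (Phi x0 q).
Proof. exact: (xgetPex x0 (islim_ex q)). Qed.

Lemma Phi_bound x0 q k : d (u (fq q k)) (Phi x0 q) <= hh k.
Proof.
apply: le_of_eps => e e0; have [N hN] := Phi_lim x0 q e0.
set n := maxn N k.
have := hN n (leq_maxl _ _); have := fq_close q (leq_maxr N k).
have := dtri (u (fq q k)) (u (fq q n)) (Phi x0 q); lra.
Qed.

Hypothesis dopen : forall U : set X, open U <->
           (forall x, U x -> exists2 e, 0 < e & forall y, d x y < e -> U y).

Lemma Phi_cont x0 : continuous (fun q : baire_space => Phi x0 q).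
Proof.
move=> q U /(nbhs_dball dopen) [e e0 he].
have e20 : 0 < e / 2 by lra.
have [k hk] := hh_small e20.
apply: filterS (cyl_nbhs q k.+1) => w hw; apply: he.
have fk : fq w k = fq q k by apply: fq_local => i ik; apply: hw.
have := Phi_bound x0 q k; have := Phi_bound x0 w k; rewrite fk.
have := dtri (Phi x0 q) (u (fq q k)) (Phi x0 w).
have := dsym (Phi x0 q) (u (fq q k)); lra.
Qed.

End Fq.

Local Open Scope ring_scope.

Theorem proposition4p1 (Omega Psi : countType) (X : topologicalType)
    (calF : set (cube Omega)) (rho : cube Omega -> cube Psi) :
  infinite_set [set: Omega] ->
  infinite_set [set: Psi] ->
  polish X ->
  (* standing assumptions on calF *)
  calF !=set0 ->
  calF `<=` infsets Omega ->
  (forall A (K : seq Omega), calF A -> calF (setminus_fin A K)) ->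
  (* rho : calF -> [Psi]^omega, partition regular *)
  (forall F, calF F -> infsets Psi (rho F)) ->
  partition_regular calF rho ->
  (* calF analytic (as a subset of [Omega]^omega) *)
  analytic calF ->
  (* rho Borel, as a map from the subspace calF to the subspace [Psi]^omega *)
  (forall B : set (cube Psi), borel_set B ->
     exists2 C : set (cube Omega), borel_set C &
       calF `&` (rho @^-1` (B `&` infsets Psi)) = calF `&` C) ->
  forall A : set X, scrL calF rho A -> analytic A.
Proof.
move=> _ _ [dd [[dpos d0 dsym dtri] dopen dcomp [D [cD clD]]]] Fne _ Fmin rhoinf _ anF rhoBor.
move=> A [[x ->]|->]; last by left.
case: (pselect (Lambda calF rho x = set0)) => [->|]; first by left.
move=> /eqP/set0P [eta0 Leta0].
have /countable_injP [fD injD] := cD.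
pose u n := xget eta0 [set y | D y /\ fD y = n].
have dense : forall y e, 0 < e -> exists n, dd (u n) y < e.
  move=> y e e0; have : closure D y by rewrite clD.
  move=> /(_ _ (dball_nbhs d0 dtri dopen y e0)) [z [Dz hz]].
  exists (fD z).
  have : [set y | D y /\ fD y = fD z] (u (fD z)) by apply: xgetPex; exists z.
  move=> [Du hu]; have -> : u (fD z) = z by apply: injD; rewrite ?in_setE.
  by rewrite dsym.
have [g [cg rg]] : exists g : baire_space -> cube Omega, continuous g /\ range g = calF.
  case: anF => [F0|h]; last exact: h.
  by exfalso; case: Fne => F; rewrite F0.
have gF z : calF (g z) by rewrite -rg; exists z.
pose hK (K : seq Omega) (z : baire_space) : cube Omega := setminus_fin (g (bcol 0 z)) K.
have chK K : continuous (hK K).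
  apply: cont_ptws => a z V; rewrite nbhs_principalE => /principal_filterP Vz.
  have h1 : nbhs (g (bcol 0 z)) [set G : cube Omega | G a = g (bcol 0 z) a].
    exact: (@nbhs_coord Omega bool (g (bcol 0 z)) a [set b | b = g (bcol 0 z) a] (bool_nbhs erefl)).
  have h2 := (comp_cont (bcol_cont (n:=0)) cg) z _ h1.
  suff : nbhs z [set w | V (hK K w a)] by [].
  apply: (filterS _ (h2 : nbhs z ((g \o bcol 0) @^-1` [set G | G a = g (bcol 0 z) a]))) => w /= hw.
  by rewrite /hK /setminus_fin hw.
pose W k j := [set s : Psi | dd (u j) (x s) < 2 * hh k].
pose qz (z : baire_space) k := fq dd u (bcol 1 z) k.
pose P z := forall k, exists K : seq Omega, forall s, rho (hK K z) s -> W k (qz z k) s.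
have openQ k j : open [set z : baire_space | qz z k = j].
  rewrite openE => z /= hz.
  have h := (bcol_cont (n:=1)) z _ (cyl_nbhs (bcol 1 z) k.+1).
  apply: (filterS _ (h : nbhs z (bcol 1 @^-1` cyl (bcol 1 z) k.+1))) => w /= hw.
  by rewrite /qz -hz; apply: fq_local => i ik; apply: hw.
have borW k j K : analytic [set z | forall s, rho (hK K z) s -> W k j s].
  pose B := [set G : cube Psi | forall s, G s -> W k j s].
  have bB : borel_set B.
    have oB : open (~` B).
      rewrite openE => G /= nBG.
      have [s [Gs nW]] : exists s, G s /\ ~ W k j s.
        apply: contrapT => hn; apply: nBG => s Gs; apply: contrapT => nW; apply: hn.
        by exists s.
      have hs : nbhs G [set G' : cube Psi | G' s = true].
        exact: (@nbhs_coord Psi bool G s [set b | b = true] (bool_nbhs Gs)).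
      by apply: filterS hs => G' hG' hB; apply: nW; exact: hB s hG'.
    have [_ hC _] := smallest_sigma_algebra setT (@open (cube Psi)).
    rewrite /borel_set; have -> : B = setT `\` ~` B by rewrite setTD setCK.
    by apply: hC; apply: sub_gen_smallest.
  have [C bC eqC] := rhoBor B bB.
  have -> : [set z | forall s, rho (hK K z) s -> W k j s] = hK K @^-1` C.
    rewrite eqEsubset; split => z hz.
    - have : (calF `&` rho @^-1` (B `&` infsets Psi)) (hK K z).
        by split; [apply: Fmin | split => //; apply: rhoinf; apply: Fmin].
      by rewrite eqC => -[].
    - have : (calF `&` C) (hK K z) by split => //; apply: Fmin.
      by rewrite -eqC => -[_ []].
  exact: borel_pre (chK K) bC.
have anS : analytic [set z | P z].
  pose V k n := match unpickle n with
    | Some (K, j) => [set z | qz z k = j] `&` [set z | forall s, rho (hK K z) s -> W k j s]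
    | None => set0 end.
  have -> : [set z | P z] = \bigcap_k \bigcup_n V k n.
    rewrite eqEsubset; split => z.
    - move=> hz k _; have [K hK'] := hz k; exists (pickle (K, qz z k)) => //.
      by rewrite /V pickleK.
    - move=> hz k; have [n _] := hz k I; rewrite /V.
      by case: (unpickle n) => [[K j]|] // [e h]; exists K; rewrite e.
  apply: analytic_bigcap => k; apply: analytic_bigcup => n; rewrite /V.
  case: (unpickle n) => [[K j]|]; last by left.
  by apply: analytic_setI; [exact: analytic_open | exact: borW].
pose Ph q := Phi dd u eta0 q.
have PhC : continuous (fun q : baire_space => Ph q).
  exact: (@Phi_cont X dd u d0 dsym dtri dcomp dopen eta0).
have PhB q k : dd (u (fq dd u q k)) (Ph q) <= hh k.
  exact: (Phi_bound u d0 dsym dtri dcomp eta0 q k).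
have inS : forall eta, Lambda calF rho x eta -> exists z, P z /\ Ph (bcol 1 z) = eta.
  move=> eta [F hF hlim].
  have [p _ gp] : range g F by rewrite rg.
  have : forall k, exists n, dd (u n) eta < hh k.+2.
    by move=> k; apply: dense; apply: hh_gt0.
  move=> /choice [q hq].
  have fqq : forall k, fq dd u q k = q k.
    apply: fq_id => k.
    apply: le_lt_trans (dtri _ eta _) _.
    have := hq k; have := hq k.+1; have := hh_S k.+1; have := hh_S k.+2.
    have := hh_gt0 k.+3; have := dsym eta (u (q k.+1)); lra.
  have Pheta : Ph q = eta.
    apply: (islim_uniq dpos d0 dsym dtri (Phi_lim u d0 dsym dtri dcomp eta0 q)).
    move=> e e0; have [N hN] := hh_small e0; exists N => n Nn.
    rewrite fqq; apply: lt_le_trans (hq n) _; apply: le_trans _ (ltW hN); apply: hh_le.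
    by rewrite (leq_trans Nn) // -addn2 leq_addr.
  pose z : baire_space := fun i => match unpickle i with
     | Some (n, m) => if n == 0%N then p m else q m | None => 0%N end.
  have z0 : bcol 0 z = p by apply: funext => m; rewrite /bcol /z pickleK.
  have z1 : bcol 1 z = q by apply: funext => m; rewrite /bcol /z pickleK.
  exists z; split; last by rewrite z1.
  move=> k; have [K hK'] := hlim _ (dball_nbhs d0 dtri dopen eta (hh_gt0 k)).
  exists K => s hs.
  move: hs; rewrite /hK z0 gp => hs; have /= h := hK' s hs.
  rewrite /W /qz /= z1 fqq.
  apply: le_lt_trans (dtri _ eta _) _.
  have := hq k; have := hh_S k; have := hh_S k.+1; have := hh_gt0 k.+2; lra.
case: anS => [S0|[f [cf rf]]].
  exfalso; have [z [Pz _]] := inS _ Leta0.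
  by have : [set z | P z] z by []; rewrite S0.
right; exists (fun w => Ph (bcol 1 (f w))); split.
  exact: (comp_cont cf (comp_cont (bcol_cont (n:=1)) PhC)).
rewrite eqEsubset; split.
- move=> _ [w _ <-]; set z := f w.
  have Pz : P z by have : [set z | P z] z by rewrite -rf; exists w.
  exists (g (bcol 0 z)); first exact: gF.
  move=> U /(nbhs_dball dopen) [e e0 he].
  have e3 : 0 < e / 3 by lra.
  have [k hk] := hh_small e3.
  have [K hK'] := Pz k; exists K => s hs; apply: he.
  have := hK' s hs; rewrite /W /= => h1.
  have := PhB (bcol 1 z) k.
  have := dtri (Ph (bcol 1 z)) (u (qz z k)) (x s).
  have := dsym (Ph (bcol 1 z)) (u (qz z k)).
  rewrite /qz; have := hh_gt0 k; lra.
- move=> eta Le; have [z [Pz <-]] := inS _ Le.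
  have [w _ fw] : range f z by rewrite rf.
  by exists w => //=; rewrite fw.
Qed.
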